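(* For a commutative ring $R$ the following are equivalent: (i) $T(R)$ is zero-dimensional; (ii) for each $f\in R$ there exists $n\geq 1$ with $\operatorname{Ann}(f^n)=\operatorname{Ann}(f^{n+1})$, and there exists $h\in\operatorname{Ann}(f^n)$ such that $\operatorname{Ann}(f^n)\cap\operatorname{Ann}(h)=0$; (iii) for each $f\in R$ there exist $n\geq 1$ and a non-zero-divisor $g\in R$ such that $f^n g=f^{2n}$.
   Context: $T(R)=S^{-1}R$ with $S$ the set of non-zero-divisors of $R$ is the total ring of fractions. Zero-dimensional means Krull dimension $0$ (every prime ideal is maximal). *)

(* Defs.v *)
From HB Require Import structures.
From mathcomp Require Import all_boot all_order all_algebra.
Set Implicit Arguments. Unset Strict Implicit. Unset Printing Implicit Defensive.
Import GRing.Theory.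
Local Open Scope ring_scope.

Definition nzd (R : comPzRingType) (s : R) : Prop := forall x : R, s * x = 0 -> x = 0.

Definition Ann (R : comPzRingType) (f : R) : R -> Prop := fun y => f * y = 0.

Lemma nzd1 (R : comPzRingType) : nzd (1 : R).
Proof. by move=> x; rewrite mul1r. Qed.

Lemma nzdM (R : comPzRingType) (s t : R) : nzd s -> nzd t -> nzd (s * t).
Proof. by move=> hs ht x; rewrite -mulrA => /hs /ht. Qed.

(* The total ring of fractions T(R) = S^{-1} R, S = non-zero-divisors,
   presented as a setoid: fractions r/s with s in S, where
   r/s = r'/s' iff r s' = r' s (no extra factor is needed since S consists
   of non-zero-divisors). *)
Record frac (R : comPzRingType) := Frac { fnum : R; fden : R; fden_nzd : nzd fden }.

Section Frac.
Variable R : comPzRingType.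

Definition feq (a b : frac R) : Prop := fnum a * fden b = fnum b * fden a.
Definition f0 : frac R := @Frac R 0 1 (@nzd1 R).
Definition f1 : frac R := @Frac R 1 1 (@nzd1 R).
Definition fadd (a b : frac R) : frac R :=
  @Frac R (fnum a * fden b + fnum b * fden a) (fden a * fden b)
        (nzdM (@fden_nzd R a) (@fden_nzd R b)).
Definition fmul (a b : frac R) : frac R :=
  @Frac R (fnum a * fnum b) (fden a * fden b) (nzdM (@fden_nzd R a) (@fden_nzd R b)).

Definition T_ideal (I : frac R -> Prop) : Prop :=
  [/\ forall a b, feq a b -> I a -> I b,
      I f0,
      forall a b, I a -> I b -> I (fadd a b) &
      forall a b, I b -> I (fmul a b)].

Definition T_prime (P : frac R -> Prop) : Prop :=
  [/\ T_ideal P, ~ P f1 & forall a b, P (fmul a b) -> P a \/ P b].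

Definition T_maximal (M : frac R -> Prop) : Prop :=
  [/\ T_ideal M, ~ M f1 &
      forall J, T_ideal J -> (forall x, M x -> J x) -> ~ J f1 ->
        forall x, J x -> M x].

Definition T_zero_dimensional : Prop :=
  forall P : frac R -> Prop, T_prime P -> T_maximal P.
End Frac.

(* Main.v *)
Require Import Defs.
From HB Require Import structures.
From mathcomp Require Import all_boot all_order all_algebra.
From mathcomp Require Import ring zify.
From mathcomp Require Import boolp classical_sets.
From Stdlib Require Import Classical.
Set Implicit Arguments. Unset Strict Implicit. Unset Printing Implicit Defensive.
Import GRing.Theory.
Local Open Scope classical_set_scope.
Local Open Scope ring_scope.

Lemma nzdX (R : comPzRingType) (s : R) (k : nat) : nzd s -> nzd (s ^+ k).
Proof.
move=> hs; elim: k => [|k IH]; first by rewrite expr0; exact: nzd1.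
by rewrite exprS; apply: nzdM.
Qed.

Lemma feq_refl (R : comPzRingType) (a : Defs.frac R) : feq a a.
Proof. by []. Qed.

Lemma feq_sym (R : comPzRingType) (a b : Defs.frac R) : feq a b -> feq b a.
Proof. by rewrite /feq => ->. Qed.

Lemma feq_trans (R : comPzRingType) (a b c : Defs.frac R) :
  feq a b -> feq b c -> feq a c.
Proof.
case: a b c => [an ad ha] [bn bd hb] [cn cd hc]; rewrite /feq /= => H1 H2.
apply/eqP; rewrite -subr_eq0; apply/eqP; apply: hb.
transitivity ((an * bd) * cd - (cn * bd) * ad); first ring.
rewrite H1 -H2; ring.
Qed.

Lemma fadd_compat (R : comPzRingType) (a a' b b' : Defs.frac R) :
  feq a a' -> feq b b' -> feq (fadd a b) (fadd a' b').
Proof.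
case: a a' b b' => [an ad ha] [an' ad' ha'] [bn bd hb] [bn' bd' hb'].
rewrite /feq /= => H1 H2.
transitivity ((an * ad') * (bd * bd') + (bn * bd') * (ad * ad')); first ring.
rewrite H1 H2; ring.
Qed.

Lemma fmul_compat (R : comPzRingType) (a a' b b' : Defs.frac R) :
  feq a a' -> feq b b' -> feq (fmul a b) (fmul a' b').
Proof.
case: a a' b b' => [an ad ha] [an' ad' ha'] [bn bd hb] [bn' bd' hb'].
rewrite /feq /= => H1 H2.
transitivity ((an * ad') * (bn * bd')); first ring.
rewrite H1 H2; ring.
Qed.

Definition sumI (R : comPzRingType) (P : Defs.frac R -> Prop) (a : Defs.frac R) (z : Defs.frac R) :=
  exists p c, P p /\ feq z (fadd p (fmul c a)).

Lemma sumI_ideal (R : comPzRingType) (P : Defs.frac R -> Prop) (a : Defs.frac R) :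
  T_ideal P -> T_ideal (sumI P a).
Proof.
case=> Peq P0 Padd Pmul; split.
- move=> x y hxy [p [c [Pp hx]]]; exists p, c; split=> //.
  exact: feq_trans (feq_sym hxy) hx.
- exists (f0 R), (f0 R); split=> //.
  by case: a => an ad ha; rewrite /feq /=; ring.
- move=> x y [p1 [c1 [Pp1 h1]]] [p2 [c2 [Pp2 h2]]].
  exists (fadd p1 p2), (fadd c1 c2); split; first exact: Padd.
  apply: feq_trans (fadd_compat h1 h2) _.
  case: a p1 p2 c1 c2 {h1 h2 Pp1 Pp2} => [an ad ha] [pn pd hp] [qn qd hq]
     [cn cd hc] [dn dd hd]; rewrite /feq /=; ring.
- move=> b x [p [c [Pp h]]].
  exists (fmul b p), (fmul b c); split; first exact: Pmul.
  apply: feq_trans (fmul_compat (feq_refl b) h) _.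
  case: a b p c {h Pp} => [an ad ha] [bn bd hb] [pn pd hp] [cn cd hc];
    rewrite /feq /=; ring.
Qed.

Lemma sumI_sub (R : comPzRingType) (P : Defs.frac R -> Prop) (a z : Defs.frac R) :
  P z -> sumI P a z.
Proof.
move=> Pz; exists z, (f0 R); split=> //.
by case: a z {Pz} => [an ad ha] [zn zd hz]; rewrite /feq /=; ring.
Qed.

Lemma sumI_a (R : comPzRingType) (P : Defs.frac R -> Prop) (a : Defs.frac R) :
  T_ideal P -> sumI P a a.
Proof.
case=> _ P0 _ _; exists (f0 R), (f1 R); split=> //.
by case: a => [an ad ha]; rewrite /feq /=; ring.
Qed.

Definition condB (R : comPzRingType) (f : R) := exists n : nat, (1 <= n)%N /\
      (forall y, Ann (f ^+ n) y <-> Ann (f ^+ n.+1) y) /\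
      (exists h : R, Ann (f ^+ n) h /\
         (forall y, Ann (f ^+ n) y -> Ann h y -> y = 0)).

Definition condC (R : comPzRingType) (f : R) :=
  exists (n : nat) (g : R), (1 <= n)%N /\ nzd g /\ f ^+ n * g = f ^+ (2 * n).

Lemma Ann_stable (R : comPzRingType) (f : R) n :
  (forall y, Ann (f ^+ n) y <-> Ann (f ^+ n.+1) y) ->
  forall k y, f ^+ (n + k) * y = 0 -> f ^+ n * y = 0.
Proof.
move=> H; elim=> [|k IH] y; first by rewrite addn0.
move=> hy; apply: IH.
have : Ann (f ^+ n) (f ^+ k * y).
  by apply/(proj2 (H _)); rewrite /Ann mulrA -exprD addSn -addnS.
by rewrite /Ann mulrA -exprD.
Qed.

Lemma BtoC (R : comPzRingType) (f : R) : condB f -> condC f.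
Proof.
move=> [n [n1 [HA [h [Hh Hy]]]]]; rewrite /Ann in Hh.
exists n, (f ^+ n + h); split=> //; split.
- move=> x hx.
  have h2 : f ^+ (n + n) * x = 0.
    rewrite exprD -mulrA; transitivity (f ^+ n * ((f ^+ n + h) * x) - (f ^+ n * h) * x).
      by ring.
    by rewrite hx Hh mulr0 mul0r subr0.
  have fx : f ^+ n * x = 0 by apply: (Ann_stable HA h2).
  apply: Hy => //; rewrite /Ann.
  by move: hx; rewrite mulrDl fx add0r.
- by rewrite mulrDr Hh addr0 -exprD mul2n addnn.
Qed.

Lemma CtoB (R : comPzRingType) (f : R) : condC f -> condB f.
Proof.
move=> [n [g [n1 [hg H]]]].
exists n; split=> //; split.
- move=> y; rewrite /Ann; split.
    by move=> hy; rewrite exprS -mulrA hy mulr0.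
  move=> hy; apply: hg.
  case: n n1 H hy => // m _ H hy.
  have : f ^+ (2 * m.+1) * y = 0.
    have -> : (2 * m.+1 = m + m.+2)%N by lia.
    by rewrite exprD -mulrA hy mulr0.
  by move=> E; rewrite mulrCA mulrA H E.
- exists (g - f ^+ n); split.
    by rewrite /Ann mulrBr H -exprD mul2n addnn subrr.
  move=> y; rewrite /Ann => h1 h2; apply: hg.
  by move: h2; rewrite mulrBl mulrC h1 subr0.
Qed.

Lemma prime_pow (R : comPzRingType) (P : Defs.frac R -> Prop) (r s : R) (hs : nzd s) :
  T_prime P -> forall k (hk : nzd (s ^+ k)),
  P (@Frac R (r ^+ k) (s ^+ k) hk) -> P (@Frac R r s hs).
Proof.
move=> [[Peq P0 Padd Pmul] P1 Pp]; elim=> [|k IH] hk.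
  move=> H; exfalso; apply: P1; apply: Peq H; rewrite /feq /=; ring.
move=> H.
have : P (fmul (@Frac R r s hs) (@Frac R (r ^+ k) (s ^+ k) (@nzdX R s k hs))).
  by apply: Peq H; rewrite /feq /= !exprS; ring.
by case/Pp => // /IH.
Qed.

Lemma CtoA (R : comPzRingType) : (forall f : R, condC f) -> T_zero_dimensional R.
Proof.
move=> HC P HP; have HP' := HP; case: HP' => [[Peq P0 Padd Pmul] P1 Pp].
split=> // J [Jeq J0 Jadd Jmul] PJ J1 [r s hs] Jx.
have [n [g [n1 [hg H]]]] := HC r.
pose a := @Frac R (r ^+ n) (s ^+ n) (@nzdX R s n hs).
pose c := @Frac R (r ^+ n - g) (s ^+ n) (@nzdX R s n hs).
have Pac : P (fmul a c).
  by apply: Peq P0; rewrite /feq /= mul0r mulr1 mulrBr H -exprD mul2n addnn subrr.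
case: (Pp _ _ Pac) => [Pa|Pc].
  exact: (@prime_pow R P r s hs HP n _ Pa).
exfalso; apply: J1.
case: n n1 H @a @c Pac Pc => // m _ H a c Pac Pc.
have Ja : J a.
  apply: Jeq (Jmul (@Frac R (r ^+ m) (s ^+ m) (@nzdX R s m hs)) _ Jx).
  by rewrite /feq /= !exprS; ring.
have Jc : J c by apply: PJ.
pose m1 := @Frac R (-1) 1 (@nzd1 R).
pose u := @Frac R (s ^+ m.+1) g hg.
apply: Jeq (Jmul u _ (Jadd _ _ Ja (Jmul m1 _ Jc))).
rewrite /feq /=; ring.
Qed.

Definition sS (R : comPzRingType) (f : R) (n : nat) (b t : R) (ht : nzd t) : Defs.frac R :=
  @Frac R (f ^+ n * (t - f * b)) t ht.

Definition inS (R : comPzRingType) (f : R) (z : Defs.frac R) :=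
  exists n b t (ht : nzd t), feq z (sS f n b ht).

Definition Fam (R : comPzRingType) (f : R) (A : Defs.frac R -> Prop) :=
  (T_ideal A /\ forall z, A z -> ~ inS f z) \/ (forall z, ~ A z).

Lemma famI (R : comPzRingType) (f : R) A z :
  Fam f A -> A z -> T_ideal A /\ forall z, A z -> ~ inS f z.
Proof. by move=> [//|H] /H. Qed.

Lemma inS_mul (R : comPzRingType) (f : R) z1 z2 :
  inS f z1 -> inS f z2 -> inS f (fmul z1 z2).
Proof.
move=> [n1 [b1 [t1 [h1 e1]]]] [n2 [b2 [t2 [h2 e2]]]].
exists (n1 + n2)%N, (b1 * t2 + b2 * t1 - f * b1 * b2), (t1 * t2), (nzdM h1 h2).
apply: feq_trans (fmul_compat e1 e2) _.
by rewrite /feq /= exprD; ring.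
Qed.

Lemma pireg (R : comPzRingType) (f : R) : T_zero_dimensional R ->
  exists n b t, nzd t /\ f ^+ n * t = f ^+ n.+1 * b.
Proof.
move=> Z; apply: NNPP => Hno.
have notS0 n b t : nzd t -> f ^+ n * (t - f * b) = 0 -> False.
  move=> ht E; apply: Hno; exists n, b, t; split=> //.
  apply/eqP; rewrite -subr_eq0; apply/eqP; rewrite -E.
  rewrite exprS; ring.
pose I0 := fun z : Defs.frac R => fnum z = 0.
have FI0 : Fam f I0.
  left; split; first split.
  - move=> [an ad ha] [bn bd hb]; rewrite /feq /I0 /= => E a0.
    by apply: ha; move: E; rewrite a0 mul0r mulrC => <-.
  - by [].
  - by move=> [an ad ha] [bn bd hb]; rewrite /I0 /= => -> ->; ring.
  - by move=> [an ad ha] [bn bd hb]; rewrite /I0 /= => ->; ring.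
  - move=> [zn zd hz]; rewrite /I0 /= => -> [n [b [t [ht]]]]; rewrite /feq /= mul0r.
    by move=> E; apply: (notS0 n b t ht); apply: hz; rewrite mulrC -E.
have chain : forall F : set (set (Defs.frac R)), F `<=` Fam f ->
    total_on F subset -> Fam f (\bigcup_(X in F) X).
  move=> F FF Ftot.
  case: (classic (exists z, (\bigcup_(X in F) X) z)); last first.
    by move=> nz; right=> z Uz; apply: nz; exists z.
  move=> [z0 [X0 FX0 X0z0]].
  have Xid : forall X z, F X -> X z -> T_ideal X /\ forall z, X z -> ~ inS f z.
    by move=> X z FX Xz; apply: (famI (FF _ FX) Xz).
  left; split; first split.
  - move=> a b ab [X FX Xa]; exists X => //.
    by case: (Xid _ _ FX Xa) => -[Xeq _ _ _] _; apply: Xeq ab Xa.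
  - exists X0 => //; by case: (Xid _ _ FX0 X0z0) => -[].
  - move=> a b [X FX Xa] [Y FY Yb].
    case: (Ftot _ _ FX FY) => [XY|YX].
      exists Y => //; case: (Xid _ _ FY Yb) => -[_ _ Yadd _] _.
      by apply: Yadd => //; apply: XY.
    exists X => //; case: (Xid _ _ FX Xa) => -[_ _ Xadd _] _.
    by apply: Xadd => //; apply: YX.
  - move=> a b [X FX Xb]; exists X => //.
    by case: (Xid _ _ FX Xb) => -[_ _ _ Xmul] _; apply: Xmul.
  - by move=> z [X FX Xz]; case: (Xid _ _ FX Xz) => _; apply.
have [A [FA maxA]] := Zorn_bigcup chain.
have [Aid Adisj] : T_ideal A /\ forall z, A z -> ~ inS f z.
  case: FA => // Aempty; exfalso; apply: (maxA I0) => //; split.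
    by move=> z /Aempty.
  by move=> sub; apply: (Aempty (f0 R)); apply: sub.
have meet : forall a, ~ A a -> exists z, sumI A a z /\ inS f z.
  move=> a Aa; apply: NNPP => nm; apply: (maxA (sumI A a)).
    split; first by move=> z; apply: sumI_sub.
    by move=> sub; apply: Aa; apply: sub; apply: sumI_a.
  left; split; first exact: sumI_ideal.
  by move=> z Sz Iz; apply: nm; exists z.
case: (Aid) => Aeq A0 Aadd Amul.
have Aprime : T_prime A.
  split=> //.
    move=> A1; apply: (Adisj _ A1); exists 0%N, 0, 1, (@nzd1 R).
    by rewrite /feq /=; ring.
  move=> a b Aab; apply: NNPP => nab.
  have Na : ~ A a by move=> ?; apply: nab; left.
  have Nb : ~ A b by move=> ?; apply: nab; right.
  have [z1 [[p1 [c1 [Ap1 e1]]] S1]] := meet a Na.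
  have [z2 [[p2 [c2 [Ap2 e2]]] S2]] := meet b Nb.
  apply: (Adisj (fmul z1 z2)); last exact: inS_mul.
  pose W := fadd (fmul (fadd p1 (fmul c1 a)) p2)
              (fadd (fmul (fmul c2 b) p1) (fmul (fmul c1 c2) (fmul a b))).
  have AW : A W.
    apply: (Aadd); first exact: (Amul _ _ Ap2).
    by apply: (Aadd); [exact: (Amul _ _ Ap1) | exact: (Amul _ _ Aab)].
  apply: Aeq AW; apply: feq_sym; apply: feq_trans (fmul_compat e1 e2) _.
  rewrite /W; case: a b p1 p2 c1 c2 {Aab nab Na Nb e1 e2 Ap1 Ap2 W}
    => [an ad ha] [bn bd hb] [pn pd hp] [qn qd hq] [cn cd hc] [dn dd hd].
  rewrite /feq /=; ring.
have [_ _ Amax] := Z A Aprime.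
pose x := @Frac R f 1 (@nzd1 R).
apply: (Adisj x).
  apply: (Amax (sumI A x)).
  - exact: sumI_ideal.
  - by move=> z; apply: sumI_sub.
  - move=> [p [c [Ap e]]]; apply: (Adisj p Ap).
    exists 0%N, (fnum c), (fden c), (@fden_nzd R c).
    move: e; case: p c {Ap} => [pn pd hp] [cn cd hc]; rewrite /feq /= => e.
    apply/eqP; rewrite -subr_eq0; apply/eqP.
    transitivity ((pn * (cd * 1) + cn * f * pd) * 1 - 1 * (pd * (cd * 1))).
      by ring.
    by rewrite e subrr.
  - exact: sumI_a.
exists 1%N, 0, 1, (@nzd1 R); rewrite /feq /=; ring.
Qed.

Lemma powlem (R : comPzRingType) (f b t : R) N :
  f ^+ N * t = f ^+ N.+1 * b -> forall k, f ^+ N * t ^+ k = f ^+ (N + k) * b ^+ k.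
Proof.
move=> E; elim=> [|k IH]; first by rewrite addn0 !expr0 !mulr1.
rewrite exprS mulrCA IH addnS exprS.
transitivity (f ^+ k * b ^+ k * (f ^+ N * t)); first by rewrite exprD; ring.
by rewrite E exprS exprD exprS; ring.
Qed.

Lemma AtoB (R : comPzRingType) (f : R) : T_zero_dimensional R -> condB f.
Proof.
move=> Z; have [n [b [t [ht E0]]]] := pireg f Z.
have E : f ^+ n.+1 * t = f ^+ n.+2 * b.
  by rewrite exprS -mulrA E0 (exprS _ n.+1) mulrA.
exists n.+1; split=> //; split.
- move=> y; rewrite /Ann; split.
    by move=> hy; rewrite exprS -mulrA hy mulr0.
  move=> hy; apply: ht.
  by rewrite mulrA (mulrC t) E -mulrA mulrCA hy mulr0.
- exists (t ^+ n.+1 - f ^+ n.+1 * b ^+ n.+1); split.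
    rewrite /Ann mulrBr (powlem E) mulrA -exprD; ring.
  move=> y; rewrite /Ann => h1 h2; apply: (@nzdX R t n.+1 ht).
  by move: h2; rewrite mulrBl -mulrA mulrCA h1 mulr0 subr0.
Qed.

Theorem lemma3p2 (R : comPzRingType) :
  (T_zero_dimensional R <->
   (forall f : R, exists n : nat, (1 <= n)%N /\
      (forall y, Ann (f ^+ n) y <-> Ann (f ^+ n.+1) y) /\
      (exists h : R, Ann (f ^+ n) h /\
         (forall y, Ann (f ^+ n) y -> Ann h y -> y = 0))))
  /\
  ((forall f : R, exists n : nat, (1 <= n)%N /\
      (forall y, Ann (f ^+ n) y <-> Ann (f ^+ n.+1) y) /\
      (exists h : R, Ann (f ^+ n) h /\
         (forall y, Ann (f ^+ n) y -> Ann h y -> y = 0)))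
   <->
   (forall f : R, exists (n : nat) (g : R), (1 <= n)%N /\ nzd g /\
      f ^+ n * g = f ^+ (2 * n))).
Proof.
split; split.
- by move=> Z f; apply: AtoB.
- by move=> HB; apply: CtoA => f; apply: BtoC; apply: HB.
- by move=> HB f; apply: BtoC; apply: HB.
- by move=> HC f; apply: CtoB; apply: HC.
Qed.
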